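(* Let $E$ be a finite set and $\mathcal{W}\subseteq\{+,-,0\}^E$. Then $\mathcal{W}$ is an affine oriented matroid if and only if $\mathcal{W}$ satisfies: (A1') if $X,Y\in\mathcal{W}$ then $X\circ(-Y)\in\mathcal{W}$; (A2') if $X,Y\in\mathcal{W}$ with $S(X,Y)\neq\emptyset$, then $I'_e(X,Y)\cap\mathcal{W}\neq\emptyset$ for all $e\in S(X,Y)$; (A3') $\mathcal{Q}(\mathcal{W})\circ\mathcal{W}\subseteq\mathcal{W}$.
   Context: For $X\in\{+,-,0\}^E$: $X^+=\{e:X_e=+\}$, $X^-=\{e:X_e=-\}$, support $\underline{X}=X^+\cup X^-$; $(-X)_e=-X_e$; composition $(X\circ Y)_e=X_e$ if $X_e\neq0$, else $Y_e$; $S(X,Y)=(X^+\cap Y^-)\cup(X^-\cap Y^+)$; $\mathcal{A}\circ\mathcal{B}=\{A\circ B: A\in\mathcal{A}, B\in\mathcal{B}\}$. Sum: $(X+Y)_e=0$ if $e\in S(X,Y)$, else $(X\circ Y)_e$. An oriented matroid on $F$ is $\mathcal{O}\subseteq\{+,-,0\}^F$ with: (O1) zero vector in $\mathcal{O}$; (O2) $X\in\mathcal{O}\Rightarrow -X\in\mathcal{O}$; (O3) $X,Y\in\mathcal{O}\Rightarrow X\circ Y\in\mathcal{O}$; (O4) if $X,Y\in\mathcal{O}$, $\underline{X}=\underline{Y}$, $e\in S(X,Y)$, there is $Z\in\mathcal{O}$ with $Z_e=0$ and $Z_f=(X\circ Y)_f=(Y\circ X)_f$ for all $f\notin S(X,Y)$.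 $\mathcal{W}\subseteq\{+,-,0\}^E$ is an affine oriented matroid if there exist $g\notin E$ and an oriented matroid $\mathcal{O}$ on $E\cup\{g\}$ with $\mathcal{W}=\{X|_E: X\in\mathcal{O}, X_g=+\}$. For arbitrary $X,Y$ and $e\in S(X,Y)$: $I'_e(X,Y)=\{V : \underline{V}\subseteq(\underline{X}\cup\underline{Y})\setminus\{e\}, V_f=(X\circ Y)_f\ \forall f\notin S(X,Y)\}$, $I'(X,Y)=\bigcup_{e\in S(X,Y)}I'_e(X,Y)$ (empty if $S(X,Y)=\emptyset$). $\mathcal{Q}(\mathcal{W})=\{X+(-Y): X,Y\in\mathcal{W}, I'(X,-Y)\cap\mathcal{W}=I'(-X,Y)\cap\mathcal{W}=\emptyset\}$. *)

(* Defs.v *)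
From HB Require Import structures.
From mathcomp Require Import all_boot.
Set Implicit Arguments. Unset Strict Implicit. Unset Printing Implicit Defensive.

Inductive sign := Pos | Neg | Zero.

Definition sign_enc (s : sign) : 'I_3 :=
  match s with Pos => inord 0 | Neg => inord 1 | Zero => inord 2 end.
Definition sign_dec (i : 'I_3) : sign :=
  match val i with 0 => Pos | 1 => Neg | _ => Zero end.
Lemma sign_encK : cancel sign_enc sign_dec.
Proof. by case; rewrite /sign_dec /= inordK. Qed.
HB.instance Definition _ := Finite.copy sign (can_type sign_encK).

Definition sopp (s : sign) : sign :=
  match s with Pos => Neg | Neg => Pos | Zero => Zero end.

Notation svec E := {ffun E -> sign}.

Section SignVectors.
Variable E : finType.
Implicit Types X Y V : svec E.

Definition zerov : svec E := [ffun _ => Zero].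
Definition negv X : svec E := [ffun e => sopp (X e)].
Definition compv X Y : svec E := [ffun e => if X e == Zero then Y e else X e].
Definition supp X : {set E} := [set e | X e != Zero].
Definition sep X Y : {set E} :=
  [set e | ((X e == Pos) && (Y e == Neg)) || ((X e == Neg) && (Y e == Pos))].
Definition sumv X Y : svec E :=
  [ffun e => if e \in sep X Y then Zero else compv X Y e].

Definition Ie' X Y (e : E) : {set svec E} :=
  [set V | (supp V \subset (supp X :|: supp Y) :\ e)
         && [forall f, (f \notin sep X Y) ==> (V f == compv X Y f)]].
Definition I' X Y : {set svec E} := \bigcup_(e in sep X Y) Ie' X Y e.

Definition Qset (W : {set svec E}) : {set svec E} :=
  [set sumv X (negv Y) | X in W, Y in W &
     (I' X (negv Y) :&: W == set0) && (I' (negv X) Y :&: W == set0)].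

Definition oriented_matroid (O : {set svec E}) : Prop :=
  [/\ zerov \in O,
      (forall X, X \in O -> negv X \in O),
      (forall X Y, X \in O -> Y \in O -> compv X Y \in O) &
      (forall X Y e, X \in O -> Y \in O -> supp X = supp Y -> e \in sep X Y ->
         exists2 Z, Z \in O &
           Z e = Zero /\
           (forall f, f \notin sep X Y ->
              Z f = compv X Y f /\ Z f = compv Y X f))].
End SignVectors.

(* Restriction of a sign vector on E ∪ {g} (= option E, g = None) to E. *)
Definition restrictv (E : finType) (X : svec (option E)) : svec E :=
  [ffun e => X (Some e)].

(* Affine oriented matroid: the new element g is modelled as None in option E. *)
Definition affine_oriented_matroid (E : finType) (W : {set svec E}) : Prop :=
  exists O : {set svec (option E)},
    oriented_matroid O /\
    W = [set restrictv X | X in O & X None == Pos].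

(* Main.v *)
Require Import Defs.
From mathcomp Require Import all_boot.
From Stdlib Require Import Classical.
Set Implicit Arguments. Unset Strict Implicit. Unset Printing Implicit Defensive.

Definition seqb (a b : sign) := match a, b with Pos,Pos | Neg,Neg | Zero,Zero => true | _,_ => false end.
Lemma eqsE (a b : sign) : (a == b) = seqb a b.
Proof. apply/eqP/idP. - by move=> ->; case: b. - by case: a; case: b. Qed.

Definition scomp (a b : sign) := match a with Zero => b | _ => a end.
Definition sepb (a b : sign) := match a, b with Pos, Neg | Neg, Pos => true | _, _ => false end.
Definition sameb (a b : sign) := match a, b with Pos, Pos | Neg, Neg => true | _, _ => false end.
Definition nzb (a : sign) := match a with Zero => false | _ => true end.

Ltac sgn := intros; repeat match goal with
  | H : is_true true -> _ |- _ => specialize (H isT)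
  | H : true = true -> _ |- _ => specialize (H erefl)
  | H : is_true false |- _ => discriminate H
  | H : false = true |- _ => discriminate H
  | H : ?x = _ |- _ => is_var x; subst x
  | H : _ = ?x |- _ => is_var x; subst x
  end; try done.

Lemma negvE (E : finType) (X : svec E) f : negv X f = sopp (X f).
Proof. by rewrite ffunE. Qed.
Lemma compvE (E : finType) (X Y : svec E) f : compv X Y f = scomp (X f) (Y f).
Proof. by rewrite ffunE eqsE; case: (X f). Qed.
Lemma sepE (E : finType) (X Y : svec E) f : (f \in sep X Y) = sepb (X f) (Y f).
Proof. by rewrite inE !eqsE; case: (X f); case: (Y f). Qed.
Lemma sumvE (E : finType) (X Y : svec E) f :
  sumv X Y f = if sepb (X f) (Y f) then Zero else scomp (X f) (Y f).
Proof. by rewrite ffunE sepE compvE. Qed.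

Lemma inIe (E : finType) (X Y V : svec E) e : V \in Ie' X Y e <->
  (V e = Zero /\ forall f, ~~ sepb (X f) (Y f) -> V f = scomp (X f) (Y f)).
Proof.
rewrite inE; split.
- case/andP => /subsetP Hs /forallP Hf; split.
  + have := Hs e; rewrite !inE !eqsE eqxx /=.
    by case: (V e) => // /(_ isT).
  + move=> f Hf'; have := Hf f; rewrite sepE Hf' /= compvE => /eqP; done.
- case=> He Hf; apply/andP; split.
  + apply/subsetP => f; rewrite !inE !eqsE => Hv.
    case: (eqVneq f e) => [Hfe|Hfe] /=; first by move: Hv; rewrite Hfe He.
    move: (Hf f) Hv; case: (X f); case: (Y f) => //= H; by rewrite H.
  + apply/forallP => f; apply/implyP; rewrite sepE => Hs.
    by rewrite Hf // compvE eqxx.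
Qed.

Definition P1 (E : finType) (X Y V : svec E) e :=
  V e = Zero /\ forall f, ~~ sameb (X f) (Y f) -> V f = scomp (X f) (sopp (Y f)).
Definition P2 (E : finType) (X Y V : svec E) e :=
  V e = Zero /\ forall f, ~~ sameb (X f) (Y f) -> V f = scomp (sopp (X f)) (Y f).

Lemma sepb_oppr a b : sepb a (sopp b) = sameb a b. Proof. by case: a; case: b. Qed.
Lemma sepb_oppl a b : sepb (sopp a) b = sameb a b. Proof. by case: a; case: b. Qed.

Lemma inIe1 (E : finType) (X Y V : svec E) e : V \in Ie' X (negv Y) e <-> P1 X Y V e.
Proof.
rewrite inIe /P1; split => -[H1 H2]; split => // f.
- by move=> H; have := H2 f; rewrite negvE sepb_oppr => ->.
- by rewrite negvE sepb_oppr; apply: H2.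
Qed.
Lemma inIe2 (E : finType) (X Y V : svec E) e : V \in Ie' (negv X) Y e <-> P2 X Y V e.
Proof.
rewrite inIe /P2; split => -[H1 H2]; split => // f.
- by move=> H; have := H2 f; rewrite negvE sepb_oppl => ->.
- by rewrite negvE sepb_oppl; apply: H2.
Qed.

Definition A1P (E : finType) (W : {set svec E}) :=
  forall X Y, X \in W -> Y \in W -> compv X (negv Y) \in W.
Definition A2P (E : finType) (W : {set svec E}) :=
  forall X Y e, X \in W -> Y \in W -> e \in sep X Y -> exists2 U, U \in W & U \in Ie' X Y e.
Definition A3P (E : finType) (W : {set svec E}) :=
  forall Q X, Q \in Qset W -> X \in W -> compv Q X \in W.

Definition Tset (E : finType) (W : {set svec E}) : {set svec E} :=
  [set Z | [forall X in W, (compv Z X \in W) && (compv (negv Z) X \in W)]].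

Lemma inT (E : finType) (W : {set svec E}) Z :
  Z \in Tset W <-> forall X, X \in W -> compv Z X \in W /\ compv (negv Z) X \in W.
Proof.
rewrite inE; split.
- by move/forallP => H X HX; have := H X; rewrite HX /= => /andP.
- by move=> H; apply/forallP => X; apply/implyP => HX; apply/andP; apply: H.
Qed.

Definition good (E : finType) (W : {set svec E}) (X Y : svec E) :=
  forall e V, sameb (X e) (Y e) -> V \in W -> ~ P1 X Y V e /\ ~ P2 X Y V e.

Lemma notgood (E : finType) (W : {set svec E}) X Y : ~ good W X Y ->
  exists e V, [/\ sameb (X e) (Y e), V \in W & P1 X Y V e \/ P2 X Y V e].
Proof.
move=> H; apply: NNPP => H'; apply: H => e V Hs HV; split => HP; apply: H';
  exists e, V; split; auto.
Qed.

Lemma goodQ (E : finType) (W : {set svec E}) X Y : X \in W -> Y \in W -> good W X Y ->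
  sumv X (negv Y) \in Qset W.
Proof.
move=> HX HY Hg; apply/imset2P; apply: (@Imset2spec _ _ _ _ _ _ _ X Y) => //.
rewrite inE HY /=; apply/andP; split; apply/eqP/setP => V; rewrite in_set0 inE;
  apply/negP => /andP[/bigcupP[e He HV] HW]; rewrite sepE negvE in He.
- rewrite sepb_oppr in He; by have [] := Hg e V He HW; move/inIe1: HV.
- rewrite sepb_oppl in He; by have [] := Hg e V He HW; move/inIe2: HV.
Qed.

Lemma good_sym (E : finType) (W : {set svec E}) X Y : good W X Y -> good W Y X.
Proof.
move=> Hg e V Hs HV.
have Hs' : sameb (X e) (Y e) by move: Hs; case: (X e); case: (Y e).
have [H1 H2] := Hg e V Hs' HV; split => -[Ve HP]; [apply: H2|apply: H1]; split => // f Hf.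
- rewrite HP; last by move: Hf; case: (X f); case: (Y f).
  by move: Hf; case: (X f); case: (Y f).
- rewrite HP; last by move: Hf; case: (X f); case: (Y f).
  by move: Hf; case: (X f); case: (Y f).
Qed.

Lemma negv_sum (E : finType) (X Y : svec E) : negv (sumv X (negv Y)) = sumv Y (negv X).
Proof. apply/ffunP => f; rewrite negvE !sumvE !negvE; by case: (X f); case: (Y f). Qed.

Lemma negvK (E : finType) (X : svec E) : negv (negv X) = X.
Proof. apply/ffunP => f; rewrite !negvE; by case: (X f). Qed.

Lemma goodT (E : finType) (W : {set svec E}) X Y : A3P W -> X \in W -> Y \in W -> good W X Y ->
  sumv X (negv Y) \in Tset W.
Proof.
move=> A3 HX HY Hg; apply/inT => X' HX'; split; apply: A3 => //; first exact: goodQ.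
rewrite negv_sum; apply: goodQ => //; exact: good_sym.
Qed.

Definition Dset (E : finType) (X Y : svec E) : {set E} := [set f | sameb (X f) (Y f)].

Lemma lemG (E : finType) (W : {set svec E}) : A2P W -> A3P W ->
  forall n (X Y : svec E), X \in W -> Y \in W -> #|Dset X Y| <= n ->
  forall F : pred E, (forall e, F e -> sameb (X e) (Y e)) ->
  (forall e V, F e -> V \in W -> ~ P1 X Y V e /\ ~ P2 X Y V e) ->
  exists2 Z, Z \in Tset W & (forall e, F e -> Z e = Zero) /\
    (forall f, ~~ sameb (X f) (Y f) -> Z f = scomp (X f) (sopp (Y f))).
Proof.
move=> A2 A3 n; elim: n => [|n IH] X Y HX HY Hn F HF Hc;
  (have [Hg|Hng] := classic (good W X Y);
   [exists (sumv X (negv Y)); [exact: goodT|split => f Hf; rewrite sumvE negvE sepb_oppr ?(HF f Hf) //; by rewrite (negbTE Hf)]|];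
   have [e [V [Hs HV HP]]] := notgood Hng).
- move: Hn; rewrite leqn0 => /eqP/card0_eq/(_ e); by rewrite !inE Hs.
- case: HP => [[Ve HV1]|[Ve HV2]].
  + have Hsub : forall f, sameb (V f) (Y f) -> sameb (X f) (Y f).
      move=> f; case: (boolP (sameb (X f) (Y f))) => // Hf; rewrite (HV1 f Hf).
      by move: Hf; case: (X f); case: (Y f).
    have Hcard : #|Dset V Y| <= n.
      have: Dset V Y \proper Dset X Y.
        apply/properP; split; first by apply/subsetP => f; rewrite !inE; exact: Hsub.
        by exists e; rewrite !inE ?Ve.
      by move/proper_card => H; rewrite -ltnS (leq_trans H Hn).
    have HFV : forall e0, F e0 -> sameb (V e0) (Y e0).
      move=> e0 He0; have Hxy := HF e0 He0; have [Hc1 _] := Hc e0 V He0 HV.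
      case: (boolP (sameb (V e0) (Y e0))) => // Hn'; exfalso.
      have [Hz|Hsp] : V e0 = Zero \/ sepb (V e0) (X e0)
        by move: Hxy Hn'; case: (V e0); case: (X e0); case: (Y e0); auto.
      * by apply: Hc1; split.
      * have [U HU HUi] : exists2 U, U \in W & U \in Ie' V X e0 by apply: A2 => //; rewrite sepE.
        move/inIe: HUi => [Ue HUf]; have [Hc1' _] := Hc e0 U He0 HU.
        apply: Hc1'; split => // f Hf; have := HUf f; rewrite (HV1 f Hf) => H.
        rewrite H; by move: Hf; case: (X f); case: (Y f).
    have HcV : forall e0 U, F e0 -> U \in W -> ~ P1 V Y U e0 /\ ~ P2 V Y U e0.
      move=> e0 U He0 HU; have [Hc1 Hc2] := Hc e0 U He0 HU.
      split => -[Ue HUf]; [apply: Hc1|apply: Hc2]; split => // f Hf;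
      (have Hf' : ~~ sameb (V f) (Y f) by apply: contra Hf; exact: Hsub);
      rewrite (HUf f Hf') (HV1 f Hf); by case: (X f); case: (Y f).
    have [Z HZ [HZ1 HZ2]] := IH V Y HV HY Hcard F HFV HcV.
    exists Z => //; split => // f Hf.
    have Hf' : ~~ sameb (V f) (Y f) by apply: contra Hf; exact: Hsub.
    rewrite (HZ2 f Hf') (HV1 f Hf); by case: (X f); case: (Y f).
  + have Hsub : forall f, sameb (X f) (V f) -> sameb (X f) (Y f).
      move=> f; case: (boolP (sameb (X f) (Y f))) => // Hf; rewrite (HV2 f Hf).
      by move: Hf; case: (X f); case: (Y f).
    have Hcard : #|Dset X V| <= n.
      have: Dset X V \proper Dset X Y.
        apply/properP; split; first by apply/subsetP => f; rewrite !inE; exact: Hsub.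
        by exists e; rewrite !inE ?Ve //; case: (X e).
      by move/proper_card => H; rewrite -ltnS (leq_trans H Hn).
    have HFV : forall e0, F e0 -> sameb (X e0) (V e0).
      move=> e0 He0; have Hxy := HF e0 He0; have [_ Hc2] := Hc e0 V He0 HV.
      case: (boolP (sameb (X e0) (V e0))) => // Hn'; exfalso.
      have [Hz|Hsp] : V e0 = Zero \/ sepb (V e0) (Y e0)
        by move: Hxy Hn'; case: (V e0); case: (X e0); case: (Y e0); auto.
      * by apply: Hc2; split.
      * have [U HU HUi] : exists2 U, U \in W & U \in Ie' V Y e0 by apply: A2 => //; rewrite sepE.
        move/inIe: HUi => [Ue HUf]; have [_ Hc2'] := Hc e0 U He0 HU.
        apply: Hc2'; split => // f Hf; have := HUf f; rewrite (HV2 f Hf) => H.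
        rewrite H; by move: Hf; case: (X f); case: (Y f).
    have HcV : forall e0 U, F e0 -> U \in W -> ~ P1 X V U e0 /\ ~ P2 X V U e0.
      move=> e0 U He0 HU; have [Hc1 Hc2] := Hc e0 U He0 HU.
      split => -[Ue HUf]; [apply: Hc1|apply: Hc2]; split => // f Hf;
      (have Hf' : ~~ sameb (X f) (V f) by apply: contra Hf; exact: Hsub);
      rewrite (HUf f Hf') (HV2 f Hf); by case: (X f); case: (Y f).
    have [Z HZ [HZ1 HZ2]] := IH X V HX HV Hcard F HFV HcV.
    exists Z => //; split => // f Hf.
    have Hf' : ~~ sameb (X f) (V f) by apply: contra Hf; exact: Hsub.
    rewrite (HZ2 f Hf') (HV2 f Hf); by case: (X f); case: (Y f).
Qed.

Lemma compvA (E : finType) (X Y Z : svec E) : compv (compv X Y) Z = compv X (compv Y Z).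
Proof. apply/ffunP => f; rewrite !compvE; by case: (X f). Qed.
Lemma negv_comp (E : finType) (X Y : svec E) : negv (compv X Y) = compv (negv X) (negv Y).
Proof. apply/ffunP => f; rewrite !negvE !compvE !negvE; by case: (X f). Qed.

Lemma Tneg (E : finType) (W : {set svec E}) Z : Z \in Tset W -> negv Z \in Tset W.
Proof. move/inT => H; apply/inT => X HX; rewrite negvK; have [] := H X HX; auto. Qed.

Lemma Tcomp (E : finType) (W : {set svec E}) Z1 Z2 :
  Z1 \in Tset W -> Z2 \in Tset W -> compv Z1 Z2 \in Tset W.
Proof.
move/inT => H1 /inT H2; apply/inT => X HX; rewrite negv_comp !compvA.
have [Ha Hb] := H2 X HX; split; [exact: (H1 _ Ha).1|exact: (H1 _ Hb).2].
Qed.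

Lemma Tzero (E : finType) (W : {set svec E}) : zerov E \in Tset W.
Proof.
apply/inT => X HX; have -> : negv (zerov E) = zerov E by apply/ffunP => f; rewrite !ffunE.
have -> : compv (zerov E) X = X by apply/ffunP => f; rewrite compvE ffunE.
by [].
Qed.

Lemma compWT (E : finType) (W : {set svec E}) X Z : A1P W -> X \in W -> Z \in Tset W ->
  compv X Z \in W.
Proof.
move=> A1 HX /inT HZ; have [_ H] := HZ X HX; have := A1 _ _ HX H.
have -> // : compv X (negv (compv (negv Z) X)) = compv X Z.
apply/ffunP => f; rewrite !compvE !negvE compvE negvE; by case: (X f); case: (Z f).
Qed.

Lemma compWW (E : finType) (W : {set svec E}) : A1P W -> A3P W ->
  forall n (X Y : svec E), X \in W -> Y \in W -> #|Dset X Y| <= n -> compv X Y \in W.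
Proof.
move=> A1 A3 n; elim: n => [|n IH] X Y HX HY Hn;
  (have [Hg|Hng] := classic (good W Y X);
   [have := compWT A1 HX (goodT A3 HY HX Hg);
    have -> // : compv X (sumv Y (negv X)) = compv X Y;
    apply/ffunP => f; rewrite !compvE sumvE negvE; by case: (X f); case: (Y f)|];
   have [e [V [Hs HV HP]]] := notgood Hng).
- move: Hn; rewrite leqn0 => /eqP/card0_eq/(_ e); rewrite !inE.
  by move: Hs; case: (X e); case: (Y e).
- case: HP => [[Ve HV1]|[Ve HV2]].
  + have -> : compv X Y = compv X V.
      apply/ffunP => f; rewrite !compvE; case: (boolP (sameb (Y f) (X f))) => [Hs'|Hf].
      * by move: Hs'; case: (X f); case: (Y f).
      * rewrite (HV1 f Hf); by move: Hf; case: (X f); case: (Y f).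
    apply: IH => //.
    have: Dset X V \proper Dset X Y.
      apply/properP; split.
      * apply/subsetP => f; rewrite !inE; case: (boolP (sameb (Y f) (X f))) => [Hs'|Hf].
          by move: Hs'; case: (X f); case: (Y f).
        rewrite (HV1 f Hf); by move: Hf; case: (X f); case: (Y f).
      * exists e; rewrite !inE ?Ve; first by move: Hs; case: (X e); case: (Y e).
        by case: (X e).
    by move/proper_card => H; rewrite -ltnS (leq_trans H Hn).
  + have -> : compv X Y = compv X (negv V).
      apply/ffunP => f; rewrite !compvE negvE; case: (boolP (sameb (Y f) (X f))) => [Hs'|Hf].
      * by move: Hs'; case: (X f); case: (Y f).
      * rewrite (HV2 f Hf); by move: Hf; case: (X f); case: (Y f).
    exact: A1.
Qed.

Lemma compWW' (E : finType) (W : {set svec E}) X Y : A1P W -> A3P W ->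
  X \in W -> Y \in W -> compv X Y \in W.
Proof. move=> A1 A3 HX HY; exact: (compWW A1 A3 HX HY (leqnn _)). Qed.

Definition liftv (E : finType) (s : sign) (X : svec E) : svec (option E) :=
  [ffun o => if o is Some e then X e else s].

Definition Oset (E : finType) (W : {set svec E}) : {set svec (option E)} :=
  [set Xh : svec (option E) | match Xh None with
            | Zero => restrictv Xh \in Tset W
            | Pos => restrictv Xh \in W
            | Neg => negv (restrictv Xh) \in W end].

Lemma inO (E : finType) (W : {set svec E}) Xh : (Xh \in Oset W) =
  match Xh None with
  | Zero => restrictv Xh \in Tset W
  | Pos => restrictv Xh \in W
  | Neg => negv (restrictv Xh) \in W end.
Proof. by rewrite inE. Qed.

Lemma restrE (E : finType) (X : svec (option E)) e : restrictv X e = X (Some e).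
Proof. by rewrite ffunE. Qed.
Lemma liftE (E : finType) s (X : svec E) o : liftv s X o = if o is Some e then X e else s.
Proof. by rewrite ffunE. Qed.
Lemma restr_lift (E : finType) s (X : svec E) : restrictv (liftv s X) = X.
Proof. by apply/ffunP => f; rewrite restrE liftE. Qed.
Lemma restr_neg (E : finType) (X : svec (option E)) : restrictv (negv X) = negv (restrictv X).
Proof. by apply/ffunP => f; rewrite restrE !negvE restrE. Qed.
Lemma restr_comp (E : finType) (X Y : svec (option E)) :
  restrictv (compv X Y) = compv (restrictv X) (restrictv Y).
Proof. by apply/ffunP => f; rewrite restrE !compvE !restrE. Qed.

Lemma liftO_Pos (E : finType) (W : {set svec E}) X : X \in W -> liftv Pos X \in Oset W.
Proof. by rewrite inO liftE restr_lift. Qed.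
Lemma liftO_Zero (E : finType) (W : {set svec E}) X : X \in Tset W -> liftv Zero X \in Oset W.
Proof. by rewrite inO liftE restr_lift. Qed.
Lemma liftO_Neg (E : finType) (W : {set svec E}) X : X \in W -> liftv Neg (negv X) \in Oset W.
Proof. by rewrite inO liftE restr_lift negvK. Qed.

Lemma negO (E : finType) (W : {set svec E}) Xh : Xh \in Oset W -> negv Xh \in Oset W.
Proof.
rewrite !inO negvE restr_neg; case: (Xh None) => /= H //; first by rewrite negvK.
exact: Tneg.
Qed.

Lemma compW_any (E : finType) (W : {set svec E}) X Yh : A1P W -> A3P W ->
  X \in W -> Yh \in Oset W -> compv X (restrictv Yh) \in W.
Proof.
move=> A1 A3 HX; rewrite inO; case: (Yh None) => H.
- exact: compWW'.
- by rewrite -(negvK (restrictv Yh)); apply: A1.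
- exact: compWT.
Qed.

Lemma compO (E : finType) (W : {set svec E}) Xh Yh : A1P W -> A3P W ->
  Xh \in Oset W -> Yh \in Oset W -> compv Xh Yh \in Oset W.
Proof.
move=> A1 A3 HX HY; rewrite inO compvE restr_comp.
move: HX; rewrite inO; case: (Xh None) => /= HX.
- exact: (compW_any A1 A3 HX HY).
- rewrite negv_comp -[negv (restrictv Yh)]restr_neg; exact: (compW_any A1 A3 HX (negO HY)).
- move: HY; rewrite inO; case: (Yh None) => /= HY.
  + by have [] := (inT _ _).1 HX _ HY.
  + by rewrite negv_comp; have [] := (inT _ _).1 HX _ HY.
  + exact: Tcomp.
Qed.

Definition ElimP (E : finType) (O : {set svec (option E)}) (Xh Yh : svec (option E)) e :=
  exists2 Z, Z \in O & Z e = Zero /\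
    (forall f, ~~ sepb (Xh f) (Yh f) -> Z f = scomp (Xh f) (Yh f)).

Lemma Elim_sym (E : finType) (O : {set svec (option E)}) (Xh Yh : svec (option E)) e :
  ElimP O Xh Yh e -> ElimP O Yh Xh e.
Proof.
case=> Z HZ [Ze HZf]; exists Z => //; split => // f Hf.
have Hf' : ~~ sepb (Xh f) (Yh f) by move: Hf; case: (Xh f); case: (Yh f).
rewrite (HZf f Hf'); move: Hf; by case: (Xh f); case: (Yh f).
Qed.

Lemma Elim_neg (E : finType) (O : {set svec (option E)}) (Xh Yh : svec (option E)) e :
  (forall X, X \in O -> negv X \in O) ->
  ElimP O (negv Xh) (negv Yh) e -> ElimP O Xh Yh e.
Proof.
move=> HO [Z HZ [Ze HZf]]; exists (negv Z); first exact: HO.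
split; first by rewrite negvE Ze.
move=> f Hf.
have Hf' : ~~ sepb (negv Xh f) (negv Yh f) by rewrite !negvE; move: Hf; case: (Xh f); case: (Yh f).
rewrite negvE (HZf f Hf') !negvE; by case: (Xh f); case: (Yh f).
Qed.

Lemma elimPP (E : finType) (W : {set svec E}) (Xh Yh : svec (option E)) e : A2P W ->
  Xh None = Pos -> Yh None = Pos -> restrictv Xh \in W -> restrictv Yh \in W ->
  sepb (Xh e) (Yh e) -> ElimP (Oset W) Xh Yh e.
Proof.
move=> A2 HXN HYN HX HY; case: e => [e|] Hs; last by rewrite HXN HYN in Hs.
have [U HU /inIe [Ue HUf]] : exists2 U, U \in W & U \in Ie' (restrictv Xh) (restrictv Yh) e
  by apply: A2 => //; rewrite sepE !restrE.
exists (liftv Pos U); first exact: liftO_Pos.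
split; first by rewrite liftE.
case=> [f|] Hf; rewrite liftE; last by rewrite HXN HYN.
by have := HUf f; rewrite !restrE; apply.
Qed.

Lemma elimPN (E : finType) (W : {set svec E}) (Xh Yh : svec (option E)) e : A2P W -> A3P W ->
  Xh None = Pos -> Yh None = Neg -> restrictv Xh \in W -> negv (restrictv Yh) \in W ->
  sepb (Xh e) (Yh e) -> ElimP (Oset W) Xh Yh e.
Proof.
move=> A2 A3 HXN HYN HX HY.
set x := restrictv Xh in HX *; set y := negv (restrictv Yh) in HY *.
have Hy : forall f, Yh (Some f) = sopp (y f) by move=> f; rewrite negvE restrE; case: (Yh (Some f)).
have Hx : forall f, Xh (Some f) = x f by move=> f; rewrite restrE.
have Hsep : forall f, sepb (Xh (Some f)) (Yh (Some f)) = sameb (x f) (y f)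
  by move=> f; rewrite Hx Hy sepb_oppr.
have Hfin : forall Z : svec E, (forall f, ~~ sameb (x f) (y f) -> Z f = scomp (x f) (sopp (y f))) ->
  forall s f, ~~ sepb (Xh f) (Yh f) -> liftv s Z f = scomp (Xh f) (Yh f).
  move=> Z HZ s [f|] Hf; rewrite liftE; last by rewrite HXN HYN in Hf.
  rewrite Hsep in Hf; by rewrite HZ // Hx Hy.
case: e => [e|] Hs.
- rewrite Hsep in Hs.
  have [[V [HV [Ve HVf]]]|N1] := classic (exists V, V \in W /\ P1 x y V e).
    exists (liftv Pos V); first exact: liftO_Pos.
    by split; [rewrite liftE|exact: (Hfin V HVf Pos)].
  have [[V [HV [Ve HVf]]]|N2] := classic (exists V, V \in W /\ P2 x y V e).
    exists (liftv Neg (negv V)); first exact: liftO_Neg.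
    split; first by rewrite liftE negvE Ve.
    have HnV : forall g, ~~ sameb (x g) (y g) -> negv V g = scomp (x g) (sopp (y g)).
      move=> g Hg; rewrite negvE HVf //; by case: (x g); case: (y g).
    exact: (Hfin _ HnV Neg).
  have [Z HZ [HZ1 HZ2]] := @lemG E W A2 A3 _ x y HX HY (leqnn _) (pred1 e)
    (fun e0 (He0 : pred1 e e0) => eq_ind_r (fun a => sameb (x a) (y a)) Hs (eqP He0))
    (fun e0 V He0 HV => conj (fun H => N1 (ex_intro _ V (conj HV (eq_ind_r (fun a => P1 x y V a) H (esym (eqP He0))))))
                             (fun H => N2 (ex_intro _ V (conj HV (eq_ind_r (fun a => P2 x y V a) H (esym (eqP He0))))))).
  exists (liftv Zero Z); first exact: liftO_Zero.
  split; [rewrite liftE; apply: HZ1; by rewrite /= eqxx|exact: (Hfin Z HZ2 Zero)].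
- have [Z HZ [_ HZ2]] := @lemG E W A2 A3 _ x y HX HY (leqnn _) pred0
    (fun e0 (H : pred0 e0) => False_ind _ (notF H)) (fun e0 V (H : pred0 e0) _ => False_ind _ (notF H)).
  exists (liftv Zero Z); first exact: liftO_Zero.
  split; [by rewrite liftE|exact: (Hfin Z HZ2 Zero)].
Qed.

Lemma lemZZ (E : finType) (W : {set svec E}) (q1 q2 : svec E) e : A2P W -> A3P W ->
  q1 \in Tset W -> q2 \in Tset W -> (forall f, nzb (q1 f) = nzb (q2 f)) ->
  sepb (q1 e) (q2 e) ->
  exists2 Z, Z \in Tset W & Z e = Zero /\
    (forall f, ~~ sepb (q1 f) (q2 f) -> Z f = scomp (q1 f) (q2 f)).
Proof.
move=> A2 A3 Hq1 Hq2 Hnz Hs.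
case: (set_0Vmem W) => [W0|[X1 HX1]].
  exists [ffun f => if f == e then Zero else scomp (q1 f) (q2 f)].
    by apply/inT => X; rewrite W0 in_set0.
  split; first by rewrite ffunE eqxx.
  move=> f Hf; rewrite ffunE; case: eqP => [Hfe|//].
  by rewrite Hfe Hs in Hf.
pose m := fun X : svec E => #|[set f | nzb (X f) && ~~ nzb (q1 f)]|.
have HX1' : [pred X | X \in W] X1 by [].
case: (arg_minnP m HX1') => X0 HX0 Hmin; rewrite /= in HX0.
have [HA HA'] := (inT _ _).1 Hq1 _ HX0.
have [HB HB'] := (inT _ _).1 Hq2 _ HX0.
have [U HU /inIe [Ue HUf]] : exists2 U, U \in W & U \in Ie' (compv q1 X0) (compv q2 X0) e.
  by apply: A2 => //; rewrite sepE !compvE; move: Hs; case: (q1 e); case: (q2 e).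
have [U' HU' /inIe [Ue' HUf']] :
    exists2 U, U \in W & U \in Ie' (compv (negv q1) X0) (compv (negv q2) X0) e.
  by apply: A2 => //; rewrite sepE !compvE !negvE; move: Hs; case: (q1 e); case: (q2 e).
have Hz : forall f, q1 f = Zero -> U f = X0 f /\ U' f = X0 f.
  move=> f H1; have H2 : q2 f = Zero by move: (Hnz f); rewrite H1; case: (q2 f).
  have := HUf f; have := HUf' f; rewrite !compvE !negvE H1 H2 /=.
  case: (X0 f) => /= H' H; by rewrite H // H'.
have Hnzf : forall f, nzb (q1 f) -> ~~ sepb (q1 f) (q2 f) -> U f = q1 f /\ U' f = sopp (q1 f).
  move=> f; have := Hnz f; have := HUf f; have := HUf' f; rewrite !compvE !negvE.
  case: (q1 f); case: (q2 f) => //= H' H _ _ _; by rewrite H // H'.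
have HF : forall f, (fun f => nzb (X0 f) && ~~ nzb (q1 f)) f -> sameb (U f) (U' f).
  move=> f /andP[H0 H1].
  have Hq : q1 f = Zero by move: H1; case: (q1 f).
  have [-> ->] := Hz f Hq; move: H0; by case: (X0 f).
have Hc : forall e0 V, (fun f => nzb (X0 f) && ~~ nzb (q1 f)) e0 -> V \in W -> ~ P1 U U' V e0 /\ ~ P2 U U' V e0.
  move=> e0 V /andP[H0 H1] HV.
  have key : V e0 = Zero -> (forall f, q1 f = Zero -> X0 f = Zero -> V f = Zero) -> m V < m X0.
    move=> Ve HVz; apply: proper_card; apply/properP; split.
    + apply/subsetP => f; rewrite !inE => /andP[Hv Hq]; rewrite Hq andbT.
      have Hq' : q1 f = Zero by move: Hq; case: (q1 f).
      case E0: (X0 f) => //; by rewrite HVz in Hv.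
    + exists e0; first by rewrite inE H0 H1.
      by rewrite inE Ve.
  have Hm := Hmin V HV; split => -[Ve HVf]; (suff: m V < m X0 by rewrite ltnNge Hm);
    apply: key => // f Hq Hx; have [Hu Hu'] := Hz f Hq; have := HVf f;
    rewrite Hu Hu' Hx /=; by apply.
have [Z HZ [HZ1 HZ2]] := @lemG E W A2 A3 _ U U' HU HU' (leqnn _) _ HF Hc.
exists Z => //; split.
+ by have := HZ2 e; rewrite Ue Ue' /=; apply.
+ move=> f Hf; case: (boolP (nzb (q1 f))) => Hq.
  * have [Hu Hu'] := Hnzf f Hq Hf.
    have Hq2e : q2 f = q1 f by move: Hq Hf (Hnz f); case: (q1 f); case: (q2 f).
    have := HZ2 f; rewrite Hq2e Hu Hu'; move: Hq; case: (q1 f) => //= _ H; by rewrite H.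
  * have Hq' : q1 f = Zero by move: Hq; case: (q1 f).
    have Hq2e : q2 f = Zero by move: (Hnz f); rewrite Hq'; case: (q2 f).
    rewrite Hq' Hq2e /=; case E0: (X0 f).
    -- by apply: HZ1; rewrite /= E0 Hq'.
    -- by apply: HZ1; rewrite /= E0 Hq'.
    -- have [Hu Hu'] := Hz f Hq'; have := HZ2 f; rewrite Hu Hu' E0 /=; by apply.
Qed.

Lemma reverse_dir (E : finType) (W : {set svec E}) : A1P W -> A2P W -> A3P W ->
  affine_oriented_matroid W.
Proof.
move=> A1 A2 A3; exists (Oset W); split.
- split.
  + rewrite inO ffunE /=.
    have -> : restrictv (zerov (option E)) = zerov E by apply/ffunP => f; rewrite !ffunE.
    exact: Tzero.
  + exact: negO.
  + move=> X Y; exact: compO.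
  + move=> Xh Yh e HX HY Hsupp He.
    suff: ElimP (Oset W) Xh Yh e.
      case=> Z HZ [Ze HZf]; exists Z => //; split => // f; rewrite sepE !compvE => Hf.
      rewrite HZf //; move: Hf; by case: (Xh f); case: (Yh f).
    have Hnz : forall o, nzb (Xh o) = nzb (Yh o).
      move=> o; move/setP: Hsupp => /(_ o); rewrite !inE !eqsE; by case: (Xh o); case: (Yh o).
    rewrite sepE in He.
    move: HX HY; rewrite !inO; have := Hnz None.
    case EX: (Xh None); case EY: (Yh None) => //= _ HX HY.
    * exact: elimPP.
    * exact: elimPN.
    * apply: Elim_sym; apply: elimPN => //; move: He; by case: (Xh e); case: (Yh e).
    * apply: Elim_neg; first by move=> X; exact: negO.
      apply: elimPP => //; rewrite ?negvE ?EX ?EY ?restr_neg //;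
      move: He; by case: (Xh e); case: (Yh e).
    * case: e He => [e|] He; last by rewrite EX EY in He.
      have [Z HZ [Ze HZf]] := @lemZZ E W (restrictv Xh) (restrictv Yh) e A2 A3 HX HY
          (fun f => ltac:(by rewrite !restrE Hnz)) (ltac:(by rewrite !restrE)).
      exists (liftv Zero Z); first exact: liftO_Zero.
      split; first by rewrite liftE.
      case=> [f|] Hf; rewrite liftE; last by rewrite EX EY.
      by have := HZf f; rewrite !restrE; apply.
- apply/setP => X; apply/idP/imsetP.
  + move=> HX; exists (liftv Pos X); last by rewrite restr_lift.
    by rewrite inE liftO_Pos //= liftE eqsE.
  + case=> Xh; rewrite inE => /andP[HXh]; rewrite eqsE => HN ->.
    move: HXh; rewrite inO; by case: (Xh None) HN.
Qed.

Lemma elimGen (T : finType) (O : {set svec T}) X Y e : oriented_matroid O ->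
  X \in O -> Y \in O -> e \in sep X Y ->
  exists2 Z, Z \in O & Z e = Zero /\
    (forall f, ~~ sepb (X f) (Y f) -> Z f = scomp (X f) (Y f)).
Proof.
case=> O1 O2 O3 O4 HX HY He.
have HXY := O3 _ _ HX HY; have HYX := O3 _ _ HY HX.
have Hs : supp (compv X Y) = supp (compv Y X).
  apply/setP => f; rewrite !inE !eqsE !compvE; by case: (X f); case: (Y f).
have He' : e \in sep (compv X Y) (compv Y X).
  move: He; rewrite !sepE !compvE; by case: (X e); case: (Y e).
have [Z HZ [Ze HZf]] := O4 _ _ _ HXY HYX Hs He'.
exists Z => //; split => // f Hf.
have Hf' : f \notin sep (compv X Y) (compv Y X).
  rewrite sepE !compvE; move: Hf; by case: (X f); case: (Y f).
have [-> _] := HZf f Hf'; rewrite !compvE; by case: (X f); case: (Y f).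
Qed.

Lemma inW (E : finType) (O : {set svec (option E)}) X :
  (X \in [set restrictv X | X in O & X None == Pos]) = (liftv Pos X \in O).
Proof.
apply/imsetP/idP.
- case=> Xh; rewrite inE => /andP[HXh]; rewrite eqsE => HN ->.
  have -> // : liftv Pos (restrictv Xh) = Xh.
  apply/ffunP => -[f|]; rewrite liftE ?restrE //; by case: (Xh None) HN.
- move=> H; exists (liftv Pos X); last by rewrite restr_lift.
  by rewrite inE H liftE eqsE.
Qed.

Lemma trich z x y : sameb x y -> [\/ z = Zero, sameb z x | sepb z x].
Proof. case: z; case: x; case: y => //= _; by [apply: Or31|apply: Or32|apply: Or33]. Qed.

Lemma QinO (E : finType) (O : {set svec (option E)}) (X Y : svec E) :
  oriented_matroid O -> liftv Pos X \in O -> liftv Pos Y \in O ->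
  (I' X (negv Y) :&: [set restrictv X | X in O & X None == Pos] = set0) ->
  (I' (negv X) Y :&: [set restrictv X | X in O & X None == Pos] = set0) ->
  liftv Zero (sumv X (negv Y)) \in O.
Proof.
move=> HO HX HY H1 H2; have [O1 O2 O3 O4] := HO.
have HnY := O2 _ HY.
have [Z HZ [Ze HZf]] : exists2 Z, Z \in O & Z None = Zero /\
    (forall f, ~~ sepb (liftv Pos X f) (negv (liftv Pos Y) f) ->
       Z f = scomp (liftv Pos X f) (negv (liftv Pos Y) f)).
  by apply: elimGen => //; rewrite sepE negvE !liftE.
have HZo : forall f, ~~ sameb (X f) (Y f) -> Z (Some f) = scomp (X f) (sopp (Y f)).
  move=> f Hf; rewrite HZf negvE !liftE //; by rewrite sepb_oppr.
have HZd : forall f, sameb (X f) (Y f) -> Z (Some f) = Zero.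
  move=> f Hs.
  have [//|Hsame|Hsep] := trich (Z (Some f)) Hs.
  - exfalso.
    have [U HU [Ue HUf]] := @elimGen _ O Z (negv (liftv Pos Y)) (Some f) HO HZ HnY
       (ltac:(rewrite sepE negvE liftE; move: Hs Hsame; by case: (Z (Some f)); case: (X f); case: (Y f))).
    have HUN : U None = Neg by rewrite HUf negvE liftE Ze.
    have HV : negv (restrictv U) \in [set restrictv X | X in O & X None == Pos].
      rewrite inW; have -> // : liftv Pos (negv (restrictv U)) = negv U.
      apply/ffunP => -[g|]; rewrite liftE negvE ?restrE ?negvE // HUN //.
      exact: O2.
    have : negv (restrictv U) \in I' (negv X) Y :&: [set restrictv X | X in O & X None == Pos].
      rewrite inE HV andbT; apply/bigcupP; exists f.
        by rewrite sepE negvE sepb_oppl.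
      apply/inIe2; split; first by rewrite negvE restrE Ue.
      move=> g Hg; rewrite negvE restrE HUf negvE liftE ?HZo //;
        move: Hg; by case: (X g); case: (Y g).
    by rewrite H2 inE.
  - exfalso.
    have [U HU [Ue HUf]] := @elimGen _ O Z (liftv Pos X) (Some f) HO HZ HX
       (ltac:(by rewrite sepE liftE)).
    have HUN : U None = Pos by rewrite HUf liftE Ze.
    have HV : restrictv U \in [set restrictv X | X in O & X None == Pos].
      rewrite inW; have -> // : liftv Pos (restrictv U) = U.
      apply/ffunP => -[g|]; rewrite liftE ?restrE // HUN //.
    have : restrictv U \in I' X (negv Y) :&: [set restrictv X | X in O & X None == Pos].
      rewrite inE HV andbT; apply/bigcupP; exists f.
        by rewrite sepE negvE sepb_oppr.
      apply/inIe1; split; first by rewrite restrE Ue.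
      move=> g Hg; rewrite restrE HUf liftE ?HZo //;
        move: Hg; by case: (X g); case: (Y g).
    by rewrite H1 inE.
have -> // : liftv Zero (sumv X (negv Y)) = Z.
apply/ffunP => -[f|]; rewrite liftE ?Ze // sumvE negvE sepb_oppr.
case: (boolP (sameb (X f) (Y f))) => Hs; [by rewrite HZd|by rewrite HZo].
Qed.

Lemma forward_dir (E : finType) (W : {set svec E}) : affine_oriented_matroid W ->
  [/\ (forall X Y, X \in W -> Y \in W -> compv X (negv Y) \in W),
      (forall X Y, X \in W -> Y \in W -> sep X Y != set0 ->
         forall e, e \in sep X Y -> Ie' X Y e :&: W != set0) &
      (forall Q X, Q \in Qset W -> X \in W -> compv Q X \in W)].
Proof.
case=> O [HO ->]; have [O1 O2 O3 O4] := HO; split.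
- move=> X Y; rewrite !inW => HX HY.
  have -> : liftv Pos (compv X (negv Y)) = compv (liftv Pos X) (negv (liftv Pos Y)).
    by apply/ffunP => -[f|]; rewrite !compvE !negvE !liftE ?compvE ?negvE.
  by apply: O3 => //; apply: O2.
- move=> X Y HX HY _ e He; rewrite inW in HX; rewrite inW in HY.
  have [Z HZ [Ze HZf]] := @elimGen _ O _ _ (Some e) HO HX HY (ltac:(by rewrite sepE !liftE -sepE)).
  have HZN : Z None = Pos by rewrite HZf; rewrite !liftE.
  apply/set0Pn; exists (restrictv Z); rewrite inE; apply/andP; split.
  + apply/inIe; split; first by rewrite restrE.
    by move=> f Hf; rewrite restrE HZf !liftE.
  + rewrite inW; have -> // : liftv Pos (restrictv Z) = Z.
    apply/ffunP => -[g|]; rewrite liftE ?restrE // HZN //.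
- move=> Q X' /imset2P[X Y HX]; rewrite inE => /andP[HY /andP[/eqP H1 /eqP H2]] -> HX'.
  rewrite inW in HX'; rewrite inW.
  have HXl : liftv Pos X \in O by rewrite -inW.
  have HYl : liftv Pos Y \in O by rewrite -inW.
  have HQ := QinO HO HXl HYl H1 H2.
  have -> : liftv Pos (compv (sumv X (negv Y)) X') = compv (liftv Zero (sumv X (negv Y))) (liftv Pos X').
    by apply/ffunP => -[f|]; rewrite !compvE !liftE ?compvE.
  exact: O3.
Qed.

Theorem corollary5p2 (E : finType) (W : {set svec E}) :
  affine_oriented_matroid W <->
  [/\ (* (A1') *)
      (forall X Y, X \in W -> Y \in W -> compv X (negv Y) \in W),
      (* (A2') *)
      (forall X Y, X \in W -> Y \in W -> sep X Y != set0 ->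
         forall e, e \in sep X Y -> Ie' X Y e :&: W != set0) &
      (* (A3') *)
      (forall Q X, Q \in Qset W -> X \in W -> compv Q X \in W)].
Proof.
split; first exact: forward_dir.
case=> A1 A2 A3; apply: reverse_dir => //.
move=> X Y e HX HY He.
have Hne : sep X Y != set0 by apply/set0Pn; exists e.
have /set0Pn [U] := A2 X Y HX HY Hne e He.
rewrite inE => /andP[HU1 HU2]; by exists U.
Qed.
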